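(* Fix $\varepsilon\in(0,\tfrac12)$ and let $r=r(n)>0$ with $r=o(\sqrt n)$. There is $n_0$ such that for all $n\ge n_0$ the following deterministic statement holds. Let $G$ be a graph on a finite vertex set $V$, let $(\mathbf X_v)_{v\in V}$ be points of $\mathcal S_n$, let $v_1,\dots,v_4\in V$ be distinct, and put $V^-=V\setminus\{v_1,\dots,v_4\}$. Suppose that for every $i\in\{1,2,3,4\}$ and every $v\in V^-$, $$r\big(d_G(v,v_i)+\varepsilon/3\big)\ \ge\ \|\mathbf X_v-c_i\|_2\ \ge\ r\big(d_G(v,v_i)-(1+\varepsilon/3)\big).$$ Then for every $j\in\{1,2,3,4\}$ and every $v\in V^-$ with $d_G(v,v_j)=\min_{1\le i\le4}d_G(v,v_i)$, the point $\mathbf X_v$ lies within Euclidean distance at most $r$ of the quarter $Q(n,j)$.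
   Context: $\mathcal S_n=[-\sqrt n/2,\sqrt n/2]^2$ with corners $c_1=(-\sqrt n/2,-\sqrt n/2)$, $c_2=(-\sqrt n/2,\sqrt n/2)$, $c_3=(\sqrt n/2,\sqrt n/2)$, $c_4=(\sqrt n/2,-\sqrt n/2)$. $Q(n,j)$ is the closed quarter of $\mathcal S_n$ (one of the four $\tfrac{\sqrt n}{2}\times\tfrac{\sqrt n}{2}$ subsquares having the origin as a corner) containing $c_j$. $d_G$ denotes graph distance in $G$. *)

(* Defs.v *)
From Stdlib Require Import Reals Lra Lia List.
Open Scope R_scope.

Definition pt := (R * R)%type.

Definition dist2 (p q : pt) : R :=
  sqrt ((fst p - fst q)^2 + (snd p - snd q)^2).

Definition hs (n : nat) : R := sqrt (INR n) / 2.

Definition in_Sn (n : nat) (p : pt) : Prop :=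
  - hs n <= fst p <= hs n /\ - hs n <= snd p <= hs n.

Definition corner (n : nat) (j : nat) : pt :=
  match j with
  | 1%nat => (- hs n, - hs n)
  | 2%nat => (- hs n, hs n)
  | 3%nat => (hs n, hs n)
  | _ => (hs n, - hs n)
  end.

Definition in_quarter (n : nat) (j : nat) (p : pt) : Prop :=
  match j with
  | 1%nat => - hs n <= fst p <= 0 /\ - hs n <= snd p <= 0
  | 2%nat => - hs n <= fst p <= 0 /\ 0 <= snd p <= hs n
  | 3%nat => 0 <= fst p <= hs n /\ 0 <= snd p <= hs n
  | _ => 0 <= fst p <= hs n /\ - hs n <= snd p <= 0
  end.

(* Euclidean distance from p to Q(n,j) is at most r (Q is compact, so the
   infimum is attained) *)
Definition near_quarter (n j : nat) (r : R) (p : pt) : Prop :=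
  exists q, in_quarter n j q /\ dist2 p q <= r.

Definition finite_type (V : Type) : Prop := exists l : list V, forall v, In v l.
Definition simple_graph {V : Type} (adj : V -> V -> Prop) : Prop :=
  (forall u v, adj u v -> adj v u) /\ (forall u, ~ adj u u).

Inductive walk {V : Type} (adj : V -> V -> Prop) : nat -> V -> V -> Prop :=
| walk0 : forall u, walk adj 0 u u
| walkS : forall k u v w, adj u v -> walk adj k v w -> walk adj (S k) u w.

(* graph distance: d_G(u,w) = k (finite); if no such k, d_G(u,w) = infinity *)
Definition gdist {V : Type} (adj : V -> V -> Prop) (u w : V) (k : nat) : Prop :=
  walk adj k u w /\ forall m, walk adj m u w -> (k <= m)%nat.

Definition little_o_sqrt (r : nat -> R) : Prop :=
  forall d, 0 < d -> exists N, forall n, (N <= n)%nat -> Rabs (r n) <= d * sqrt (INR n).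

(* Main.v *)
Require Import Defs.
From Stdlib Require Import Reals Lra Lia List.
Open Scope R_scope.

Lemma key (A B h s d r : R) : 0 <= A -> 0 <= B -> A*A = B*B + 4*h*s ->
  B*B <= 2*h*h -> A - B <= d -> 0 <= d <= 4*r/3 -> 0 < r -> 100*r <= h ->
  s <= r.
Proof.
  intros HA HB HAB HB2 Hd [Hd0 Hd1] Hr Hh.
  assert (HB1 : B <= 142/100 * h).
  { destruct (Rle_lt_dec B (142/100*h)) as [|H]; auto. nra. }
  assert (H1 : A*A <= (B+d)*(B+d)) by nra.
  assert (H2 : 4*h*s <= 2*B*d + d*d) by nra.
  assert (H3 : 2*B*d <= 284/100*h*d) by nra.
  assert (H4 : d*d <= d*(4*h/300)) by nra.
  assert (H5 : 4*h*s <= 4*h*(d*7134/10000)) by nra.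
  assert (s <= d*7134/10000) by nra.
  lra.
Qed.

Lemma sq_nonneg2 a b : 0 <= a^2 + b^2.
Proof. nra. Qed.

Lemma G1 (h r d x y : R) : 0 < r -> 100*r <= h -> 0 <= d <= 4*r/3 ->
  -h <= x <= h -> -h <= y <= h ->
  dist2 (x,y) (-h,-h) - dist2 (x,y) (h,-h) <= d ->
  dist2 (x,y) (-h,-h) - dist2 (x,y) (-h,h) <= d ->
  dist2 (x,y) (-h,-h) - dist2 (x,y) (h,h) <= d ->
  exists q1 q2, (-h <= q1 <= 0 /\ -h <= q2 <= 0) /\ dist2 (x,y) (q1,q2) <= r.
Proof.
  unfold dist2; simpl. intros Hr Hh Hd Hx Hy H1 H2 H3.
  set (A := sqrt ((x - - h) ^ 2 + (y - - h) ^ 2)) in *.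
  set (B := sqrt ((x - h) ^ 2 + (y - - h) ^ 2)) in *.
  set (C := sqrt ((x - - h) ^ 2 + (y - h) ^ 2)) in *.
  set (D := sqrt ((x - h) ^ 2 + (y - h) ^ 2)) in *.
  assert (EA : A*A = (x - - h) ^ 2 + (y - - h) ^ 2) by (apply sqrt_sqrt; apply sq_nonneg2).
  assert (EB : B*B = (x - h) ^ 2 + (y - - h) ^ 2) by (apply sqrt_sqrt; apply sq_nonneg2).
  assert (EC : C*C = (x - - h) ^ 2 + (y - h) ^ 2) by (apply sqrt_sqrt; apply sq_nonneg2).
  assert (ED : D*D = (x - h) ^ 2 + (y - h) ^ 2) by (apply sqrt_sqrt; apply sq_nonneg2).
  assert (PA : 0 <= A) by apply sqrt_pos.
  assert (PB : 0 <= B) by apply sqrt_pos.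
  assert (PC : 0 <= C) by apply sqrt_pos.
  assert (PD : 0 <= D) by apply sqrt_pos.
  assert (Hr2 : r = sqrt (r^2)) by (rewrite sqrt_pow2; lra).
  destruct (Rle_lt_dec x 0) as [Hx0|Hx0]; destruct (Rle_lt_dec y 0) as [Hy0|Hy0].
  - exists x, y. split; [lra|]. rewrite Hr2. apply sqrt_le_1_alt. nra.
  - exists x, 0. split; [lra|].
    assert (y <= r).
    { apply (key A C h y d r); auto; nra. }
    rewrite Hr2. apply sqrt_le_1_alt. nra.
  - exists 0, y. split; [lra|].
    assert (x <= r).
    { apply (key A B h x d r); auto; nra. }
    rewrite Hr2. apply sqrt_le_1_alt. nra.
  - exists 0, 0. split; [lra|].
    assert (x + y <= r).
    { apply (key A D h (x+y) d r); auto; nra. }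
    rewrite Hr2. apply sqrt_le_1_alt. nra.
Qed.
Lemma flipy a b c e : dist2 (a, -b) (c, e) = dist2 (a,b) (c, -e).
Proof. unfold dist2; simpl; f_equal; ring. Qed.
Lemma flipx a b c e : dist2 (-a, b) (c, e) = dist2 (a,b) (-c, e).
Proof. unfold dist2; simpl; f_equal; ring. Qed.

Theorem lemma4p1 (eps : R) (r : nat -> R) :
  0 < eps < 1/2 ->
  (forall n, 0 < r n) ->
  little_o_sqrt r ->
  exists n0 : nat, forall n : nat, (n0 <= n)%nat ->
  forall (V : Type) (adj : V -> V -> Prop) (X : V -> pt) (vs : nat -> V),
    finite_type V ->
    simple_graph adj ->
    (forall v, in_Sn n (X v)) ->
    (forall i j, (1 <= i <= 4)%nat -> (1 <= j <= 4)%nat -> i <> j -> vs i <> vs j) ->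
    (forall i v, (1 <= i <= 4)%nat -> (forall l, (1 <= l <= 4)%nat -> v <> vs l) ->
       exists k, gdist adj v (vs i) k /\
         r n * (INR k + eps / 3) >= dist2 (X v) (corner n i) /\
         dist2 (X v) (corner n i) >= r n * (INR k - (1 + eps / 3))) ->
    forall j v, (1 <= j <= 4)%nat -> (forall l, (1 <= l <= 4)%nat -> v <> vs l) ->
    forall kj, gdist adj v (vs j) kj ->
    (forall i ki, (1 <= i <= 4)%nat -> gdist adj v (vs i) ki -> (kj <= ki)%nat) ->
    near_quarter n j (r n) (X v).
Proof.
  intros Heps Hrpos Ho.
  destruct (Ho (1/200)) as [N HN]; [lra|].
  exists N. intros n Hn V adj X vs _ _ HS _ Hhyp j v Hj Hv kj Hkj Hmin.
  pose proof (HN n Hn) as Hrn. rewrite Rabs_right in Hrn by (specialize (Hrpos n); lra).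
  pose proof (Hrpos n) as Hr.
  assert (Hh : 100 * r n <= hs n) by (unfold hs; lra).
  set (d := r n * (1 + 2*(eps/3))).
  assert (Hd : 0 <= d <= 4 * r n / 3) by (unfold d; nra).
  destruct (Hhyp j v Hj Hv) as [kj' [[Hw Hm] [Hup _]]].
  assert (kj' = kj).
  { apply Nat.le_antisymm. apply Hm. apply Hkj. apply (proj2 Hkj). exact Hw. }
  subst kj'.
  assert (Hall : forall i, (1 <= i <= 4)%nat ->
     dist2 (X v) (corner n j) - dist2 (X v) (corner n i) <= d).
  { intros i Hi. destruct (Hhyp i v Hi Hv) as [ki [Hg [_ Hlo]]].
    pose proof (Hmin i ki Hi Hg) as Hle. apply le_INR in Hle.
    unfold d. nra. }
  pose proof (HS v) as HSv. unfold near_quarter.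
  destruct (X v) as [x y] eqn:EX. unfold in_Sn in HSv; simpl in HSv.
  pose proof (Hall 1%nat ltac:(lia)) as H1.
  pose proof (Hall 2%nat ltac:(lia)) as H2.
  pose proof (Hall 3%nat ltac:(lia)) as H3.
  pose proof (Hall 4%nat ltac:(lia)) as H4.
  set (h := hs n) in *.
  assert (Hj4 : (j = 1 \/ j = 2 \/ j = 3 \/ j = 4)%nat) by lia.
  destruct Hj4 as [E|[E|[E|E]]]; subst j;
    simpl in H1, H2, H3, H4 |- *; fold h in H1, H2, H3, H4 |- *.
  - destruct (G1 h (r n) d x y) as [q1 [q2 [Hq Hdq]]]; auto; try lra.
    exists (q1, q2). simpl. auto.
  - destruct (G1 h (r n) d x (-y)) as [q1 [q2 [Hq Hdq]]]; auto; try lra;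
      rewrite ?flipy, ?Ropp_involutive; try lra.
    exists (q1, -q2). simpl. split; [lra|]. rewrite flipy in Hdq. exact Hdq.
  - destruct (G1 h (r n) d (-x) (-y)) as [q1 [q2 [Hq Hdq]]]; auto; try lra;
      rewrite ?flipy, ?flipx, ?Ropp_involutive; try lra.
    exists (-q1, -q2). simpl. split; [lra|]. rewrite flipy, flipx in Hdq. exact Hdq.
  - destruct (G1 h (r n) d (-x) y) as [q1 [q2 [Hq Hdq]]]; auto; try lra;
      rewrite ?flipx, ?Ropp_involutive; try lra.
    exists (-q1, q2). simpl. split; [lra|]. rewrite flipx in Hdq. exact Hdq.
Qed.
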